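(* Let $P_6(x,y,s)=s-(x+y+1)\big(\frac1x+\frac1y+1\big)$ and $V(P_6)=\{(x,y,s)\in(\mathbb{C}^\times)^3 : P_6(x,y,s)=0\}$. The map $(x,y,s)\mapsto s$ restricts to a fibration of the Deninger cycle $\{(x,y,s)\in V(P_6) : |x|=|y|=1,\ |s|>1\}\setminus\{(1,1,9)\}$ above the interval $(1,9)$. *)

(* Defs.v *)
From HB Require Import structures.
From mathcomp Require Import all_boot all_order all_algebra.
From mathcomp Require Import all_classical all_reals all_analysis.
From mathcomp Require Import complex.
Import Order.TTheory GRing.Theory Num.Theory.
Import numFieldTopology.Exports numFieldNormedType.Exports.
Local Open Scope classical_set_scope.
Local Open Scope ring_scope.

(* The complex numbers C = R[i] (R a real closed / real type), seen as a
   numClosedFieldType so that it inherits the norm topology of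
   MathComp-Analysis. *)
Definition CC (R : realType) : numClosedFieldType := R[i].

Definition P6 {R : realType} (x y s : CC R) : CC R :=
  s - (x + y + 1) * (x^-1 + y^-1 + 1).

Definition VP6 (R : realType) : set (CC R * CC R * CC R) :=
  [set p | [/\ p.1.1 != 0, p.1.2 != 0, p.2 != 0 & P6 p.1.1 p.1.2 p.2 = 0]].

Definition deninger_cycle (R : realType) : set (CC R * CC R * CC R) :=
  [set p | VP6 R p /\ [/\ `|p.1.1| = 1, `|p.1.2| = 1 & 1 < `|p.2|]].

Definition interval_1_9 (R : realType) : set (CC R) :=
  [set s | s \is Num.real /\ 1 < s < 9].

(* f restricted to A is a (locally trivial) fibration above B:
   f maps A onto B, and every b in B has an open neighbourhood U such that,
   writing U_B := U ∩ B (open in B) and A_U := A ∩ f^{-1}(U_B), there is a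
   fibre space F and a homeomorphism h : A_U -> U_B × F (with inverse g)
   commuting with the projections (fst ∘ h = f on A_U).  All topologies are
   the subspace topologies. *)
Definition fibration_above {X Y : topologicalType} (f : X -> Y)
    (A : set X) (B : set Y) : Prop :=
  f @` A = B /\
  forall b, B b ->
    exists U : set Y, [/\ open U, U b &
      exists (F : topologicalType) (h : X -> Y * F) (g : Y * F -> X),
        let AU := A `&` f @^-1` (U `&` B) in
        let UF := (U `&` B) `*` [set: F] in
        [/\ {within AU, continuous h},
            {within UF, continuous g},
            (forall x, AU x -> [/\ UF (h x), g (h x) = x & (h x).1 = f x]) &
            (forall q, UF q -> AU (g q) /\ h (g q) = q)]].

(* Main.v *)
Require Import Defs.
From HB Require Import structures.
From mathcomp Require Import all_boot all_order all_algebra.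
From mathcomp Require Import all_classical all_reals all_analysis.
From mathcomp Require Import complex.
From mathcomp Require Import ring lra.
Import Order.TTheory GRing.Theory Num.Theory.
Import numFieldTopology.Exports numFieldNormedType.Exports.
Local Open Scope classical_set_scope.
Local Open Scope ring_scope.

(* Proof: explicit local trivialisation over the
   whole interval (1,9), with fibre the unit circle of C. *)

Section Alg.
Variable R : realType.
Implicit Types (s a b : R).

Definition rr s : R := Num.sqrt s.
Definition kap s : R := (s - 3) / (2 * rr s).
Definition ee0 s : R := Num.sqrt (1 - kap s).
Definition fe s (x1 x2 y1 y2 : R) : R :=
  2 * (x2 * y1 - x1 * y2) /
  (Num.sqrt ((x1 + y1) ^+ 2 + (x2 + y2) ^+ 2) * Num.sqrt (2 * rr s)).
Definition fa s (x1 x2 y1 y2 : R) : R := fe s x1 x2 y1 y2 / ee0 s.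
Definition fb s (x1 x2 y1 y2 : R) : R :=
  (x2 + y2) / rr s / (ee0 s * Num.sqrt (1 + kap s + fe s x1 x2 y1 y2 ^+ 2)).

Definition ie s a : R := a * ee0 s.
Definition iq s a b : R := b * ee0 s * Num.sqrt (1 + kap s + ie s a ^+ 2).
Definition iw1 s a : R := rr s * (ie s a ^+ 2 + kap s) - 1.
Definition iw2 s a b : R := rr s * iq s a b.
Definition ic s a b : R :=
  ie s a * Num.sqrt (2 * rr s) / Num.sqrt (iw1 s a ^+ 2 + iw2 s a b ^+ 2).
Definition gx1 s a b : R := (iw1 s a - ic s a b * iw2 s a b) / 2.
Definition gx2 s a b : R := (iw2 s a b + ic s a b * iw1 s a) / 2.
Definition gy1 s a b : R := (iw1 s a + ic s a b * iw2 s a b) / 2.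
Definition gy2 s a b : R := (iw2 s a b - ic s a b * iw1 s a) / 2.

Lemma pos_neq0 {x : R} : 0 < x -> x != 0.
Proof. by move=> h; rewrite gt_eqF. Qed.

Lemma sqrtK {v : R} : 0 <= v -> Num.sqrt v ^+ 2 = v.
Proof. exact: sqr_sqrtr. Qed.

Lemma sqrt_pos {v : R} : 0 < v -> 0 < Num.sqrt v.
Proof. by rewrite sqrtr_gt0. Qed.

Lemma s_facts s : 1 < s < 9 ->
  1 < rr s /\ rr s < 3 /\ rr s ^+ 2 = s /\ -1 < kap s /\ kap s < 1 /\
      kap s = (rr s ^+ 2 - 3) / (2 * rr s).
Proof.
move=> /andP[s1 s9].
have s0 : 0 <= s by lra.
have r2 : rr s ^+ 2 = s := sqrtK s0.
have r0 : 0 <= rr s by exact: sqrtr_ge0.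
rewrite /kap.
move: (rr s) r2 r0 => r r2 r0.
have r2' : r * r = s by rewrite -expr2.
have r1 : 1 < r by nra.
have r3 : r < 3 by nra.
have r2p : 0 < 2 * r by lra.
rewrite r2.
do 3 (split => //).
split; first by rewrite ltr_pdivlMr //; nra.
split => //; by rewrite ltr_pdivrMr //; nra.
Qed.

Lemma inv_ok s a b : 1 < s < 9 -> a ^+ 2 + b ^+ 2 = 1 ->
  [/\ gx1 s a b ^+ 2 + gx2 s a b ^+ 2 = 1,
      gy1 s a b ^+ 2 + gy2 s a b ^+ 2 = 1,
      (1 + gx1 s a b + gy1 s a b) ^+ 2 + (gx2 s a b + gy2 s a b) ^+ 2 = s,
      fa s (gx1 s a b) (gx2 s a b) (gy1 s a b) (gy2 s a b) = a &
      fb s (gx1 s a b) (gx2 s a b) (gy1 s a b) (gy2 s a b) = b].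
Proof.
move=> hs hab; have [r1 [r3 [r2 [k1 [k2 kE]]]]] := @s_facts s hs.
rewrite /fa /fb /fe /gx1 /gx2 /gy1 /gy2 /ic /iw2 /iw1 /iq /ie.
have e0p : 0 < ee0 s by apply: sqrt_pos; lra.
have e02 : ee0 s ^+ 2 = 1 - kap s by apply: sqrtK; lra.
set e0 := ee0 s in e0p e02 *; set k := kap s in k1 k2 kE e02 *.
set r := rr s in r1 r3 r2 kE *; clearbody e0 k r.
have rk : 2 * r * k = r ^+ 2 - 3.
  by rewrite kE; field; apply: pos_neq0; lra.
have E2 : (a * e0) ^+ 2 = a ^+ 2 * (1 - k) by rewrite exprMn e02.
set e := a * e0 in E2 *; have he : e = a * e0 by []; clearbody e.
have S2 : Num.sqrt (1 + k + e ^+ 2) ^+ 2 = 1 + k + e ^+ 2.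
  by apply: sqrtK; have := sqr_ge0 e; lra.
have Sp : 0 < Num.sqrt (1 + k + e ^+ 2).
  by apply: sqrt_pos; have := sqr_ge0 e; lra.
set S := Num.sqrt (1 + k + e ^+ 2) in S2 Sp *.
have hS : S = Num.sqrt (1 + k + e ^+ 2) by []; clearbody S.
have pq : (e ^+ 2 + k) ^+ 2 + (b * e0 * S) ^+ 2 = 1.
  rewrite !exprMn e02 S2 E2 (_ : b ^+ 2 = 1 - a ^+ 2); last by lra.
  ring.
set p := e ^+ 2 + k in pq *; set q := b * e0 * S in pq *.
have hq : q = b * e0 * S by [].
have hp : p = e ^+ 2 + k by [].
clearbody p q.
set w1 := r * p - 1; set w2 := r * q.
have W4 : w1 ^+ 2 + w2 ^+ 2 = 4 - 2 * r * e ^+ 2.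
  rewrite /w1 /w2 (_ : (r * p - 1) ^+ 2 + (r * q) ^+ 2 =
     r ^+ 2 * (p ^+ 2 + q ^+ 2) - 2 * r * p + 1); last by ring.
  by rewrite pq hp mulrDr rk; ring.
have Wp : 0 < w1 ^+ 2 + w2 ^+ 2.
  rewrite W4; have : e ^+ 2 <= 1 - k.
    by rewrite E2; have := sqr_ge0 b; have := sqr_ge0 a; nra.
  by nra.
have sW2 := sqrtK (ltW Wp); have sWp := sqrt_pos Wp.
set sW := Num.sqrt (w1 ^+ 2 + w2 ^+ 2) in sW2 sWp *.
have t2 : Num.sqrt (2 * r) ^+ 2 = 2 * r by apply: sqrtK; lra.
have tp : 0 < Num.sqrt (2 * r) by apply: sqrt_pos; lra.
set t := Num.sqrt (2 * r) in t2 tp *.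
set c := e * t / sW.
have cW : c ^+ 2 * (w1 ^+ 2 + w2 ^+ 2) = 2 * r * e ^+ 2.
  rewrite /c -sW2 expr_div_n exprMn t2; field; exact: pos_neq0.
have hc : c = e * t / sW by [].
have hsW : sW = Num.sqrt (w1 ^+ 2 + w2 ^+ 2) by [].
have hw1 : w1 = r * p - 1 by [].
have hw2 : w2 = r * q by [].
clearbody c sW t w1 w2.
have sW0 := pos_neq0 sWp; have t0 := pos_neq0 tp.
have e00 := pos_neq0 e0p; have S0 := pos_neq0 Sp.
have r0 : r != 0 by apply: pos_neq0; lra.
have s0 : 1 + (w1 - c * w2) / 2 + (w1 + c * w2) / 2 = 1 + w1 by field.
have s1 : (w1 - c * w2) / 2 + (w1 + c * w2) / 2 = w1 by field.
have s2 : (w2 + c * w1) / 2 + (w2 - c * w1) / 2 = w2 by field.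
have num : 2 * ((w2 + c * w1) / 2 * ((w1 + c * w2) / 2) -
       (w1 - c * w2) / 2 * ((w2 - c * w1) / 2)) = c * (w1 ^+ 2 + w2 ^+ 2).
  by field.
rewrite s0 s1 s2 num -hsW.
have fe_e : c * (w1 ^+ 2 + w2 ^+ 2) / (sW * t) = e.
  by rewrite hc -sW2; field; rewrite t0 sW0.
rewrite fe_e -hS.
split.
- rewrite (_ : _ + _ = ((w1 ^+ 2 + w2 ^+ 2) + c ^+ 2 * (w1 ^+ 2 + w2 ^+ 2)) / 4).
    by rewrite cW W4; field.
  by field.
- rewrite (_ : _ + _ = ((w1 ^+ 2 + w2 ^+ 2) + c ^+ 2 * (w1 ^+ 2 + w2 ^+ 2)) / 4).
    by rewrite cW W4; field.
  by field.
- rewrite hw1 hw2 (_ : (1 + (r * p - 1)) ^+ 2 + (r * q) ^+ 2 = r ^+ 2 * (p ^+ 2 + q ^+ 2)).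
    by rewrite pq mulr1.
  by ring.
- by rewrite he; field.
- by rewrite hw2 hq; field; rewrite S0 e00 r0.
Qed.


Lemma fwd_ok s x1 x2 y1 y2 : 1 < s < 9 -> x1 ^+ 2 + x2 ^+ 2 = 1 ->
  y1 ^+ 2 + y2 ^+ 2 = 1 -> (1 + x1 + y1) ^+ 2 + (x2 + y2) ^+ 2 = s ->
  let a := fa s x1 x2 y1 y2 in let b := fb s x1 x2 y1 y2 in
  [/\ a ^+ 2 + b ^+ 2 = 1, gx1 s a b = x1, gx2 s a b = x2,
      gy1 s a b = y1 & gy2 s a b = y2].
Proof.
move=> hs hx hy hsum a b.
have [r1 [r3 [r2 [k1 [k2 kE]]]]] := @s_facts s hs.
have e0p : 0 < ee0 s by apply: sqrt_pos; lra.
have e02 : ee0 s ^+ 2 = 1 - kap s by apply: sqrtK; lra.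
have hie : ie s a = fe s x1 x2 y1 y2.
  by rewrite /ie /a /fa; field; apply: pos_neq0.
have rpos : 0 < rr s by lra.
have Spos : 0 < Num.sqrt (1 + kap s + fe s x1 x2 y1 y2 ^+ 2).
  by apply: sqrt_pos; have := sqr_ge0 (fe s x1 x2 y1 y2); lra.
have hiq : iq s a b = (x2 + y2) / rr s.
  by rewrite /iq hie /b /fb; field; rewrite (pos_neq0 rpos) (pos_neq0 Spos) (pos_neq0 e0p).

have hiw1 : iw1 s a = rr s * (fe s x1 x2 y1 y2 ^+ 2 + kap s) - 1 by rewrite /iw1 hie.
have hiw2 : iw2 s a b = x2 + y2.
  by rewrite /iw2 hiq; field; apply: pos_neq0; lra.
have hic : ic s a b = fe s x1 x2 y1 y2 * Num.sqrt (2 * rr s) /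
   Num.sqrt (iw1 s a ^+ 2 + (x2 + y2) ^+ 2) by rewrite /ic hie hiw2.
rewrite /gx1 /gx2 /gy1 /gy2 hic hiw2 hiw1.
have W0 : 0 <= (x1 + y1) ^+ 2 + (x2 + y2) ^+ 2 by rewrite addr_ge0 // sqr_ge0.
have sE : s = 1 + 2 * (x1 + y1) + ((x1 + y1) ^+ 2 + (x2 + y2) ^+ 2).
  by rewrite -hsum; ring.
have Wp : 0 < (x1 + y1) ^+ 2 + (x2 + y2) ^+ 2.
  rewrite lt_neqAle W0 andbT; apply/eqP => W00.
  have : (x1 + y1) ^+ 2 = 0.
    by apply/eqP; rewrite eq_le sqr_ge0 andbT [X in _ <= X]W00 lerDl sqr_ge0.
  by move/eqP; rewrite sqrf_eq0 => /eqP h; move: sE; rewrite -W00 h; lra.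
have key : 4 * (x2 * y1 - x1 * y2) ^+ 2 =
   ((x1 + y1) ^+ 2 + (x2 + y2) ^+ 2) * (4 - ((x1 + y1) ^+ 2 + (x2 + y2) ^+ 2)).
  have -> : (x1 + y1) ^+ 2 + (x2 + y2) ^+ 2 =
     (x1 ^+ 2 + x2 ^+ 2) + (y1 ^+ 2 + y2 ^+ 2) + 2 * (x1 * y1 + x2 * y2) by ring.
  rewrite hx hy.
  have : (x2 * y1 - x1 * y2) ^+ 2 + (x1 * y1 + x2 * y2) ^+ 2 =
     (x1 ^+ 2 + x2 ^+ 2) * (y1 ^+ 2 + y2 ^+ 2) by ring.
  rewrite hx hy mulr1 => h.
  have -> : (x2 * y1 - x1 * y2) ^+ 2 = 1 - (x1 * y1 + x2 * y2) ^+ 2 by rewrite -h; ring.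
  ring.
have id1 : ((x1 + y1) ^+ 2 + (x2 + y2) ^+ 2) * (x1 - y1) +
    2 * (x2 * y1 - x1 * y2) * (x2 + y2) = 0.
  have -> : ((x1 + y1) ^+ 2 + (x2 + y2) ^+ 2) * (x1 - y1) +
    2 * (x2 * y1 - x1 * y2) * (x2 + y2) =
    (x1 + y1) * ((x1 ^+ 2 + x2 ^+ 2) - (y1 ^+ 2 + y2 ^+ 2)) by ring.
  by rewrite hx hy subrr mulr0.
have id2 : ((x1 + y1) ^+ 2 + (x2 + y2) ^+ 2) * (x2 - y2) -
    2 * (x2 * y1 - x1 * y2) * (x1 + y1) = 0.
  have -> : ((x1 + y1) ^+ 2 + (x2 + y2) ^+ 2) * (x2 - y2) -
    2 * (x2 * y1 - x1 * y2) * (x1 + y1) =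
    (x2 + y2) * ((x1 ^+ 2 + x2 ^+ 2) - (y1 ^+ 2 + y2 ^+ 2)) by ring.
  by rewrite hx hy subrr mulr0.
rewrite /a /b /fa /fb {hie hiq hiw1 hiw2 hic a b}.
have sW2 := sqrtK W0; have sWp := sqrt_pos Wp.
have t2 : Num.sqrt (2 * rr s) ^+ 2 = 2 * rr s by apply: sqrtK; lra.
have tp : 0 < Num.sqrt (2 * rr s) by apply: sqrt_pos; lra.
have hfe : fe s x1 x2 y1 y2 = 2 * (x2 * y1 - x1 * y2) /
  (Num.sqrt ((x1 + y1) ^+ 2 + (x2 + y2) ^+ 2) * Num.sqrt (2 * rr s)) by [].
move: hfe.
set W := (x1 + y1) ^+ 2 + (x2 + y2) ^+ 2 in W0 sE Wp key id1 id2 sW2 sWp *.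
set sW := Num.sqrt W in sW2 sWp *.
set t := Num.sqrt (2 * rr s) in t2 tp *.
set im := x2 * y1 - x1 * y2 in key id1 id2 *.
set fe := fe s x1 x2 y1 y2.
have S2 : Num.sqrt (1 + kap s + fe ^+ 2) ^+ 2 = 1 + kap s + fe ^+ 2.
  by apply: sqrtK; have := sqr_ge0 fe; lra.
set S := Num.sqrt (1 + kap s + fe ^+ 2) in Spos S2 *.
set e0 := ee0 s in e0p e02 *.
set k := kap s in kE S2 e02 *. set r := rr s in r1 r3 r2 kE t2 tp rpos *.
have hW : W = (x1 + y1) ^+ 2 + (x2 + y2) ^+ 2 by [].
have hsW : sW = Num.sqrt W by [].
move=> hfe; clearbody S e0 W sW t im fe k r.
have W00 := pos_neq0 Wp; have sW0 := pos_neq0 sWp; have t0 := pos_neq0 tp.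
have r0 : r != 0 by apply: pos_neq0; lra.
have fe2 : fe ^+ 2 = (4 - W) / (2 * r).
  rewrite hfe expr_div_n !exprMn sW2 t2 (_ : 2 ^+ 2 = 4); last by ring.
  rewrite key; field; rewrite W00 r0; lra.
have hP : r * (fe ^+ 2 + k) - 1 = x1 + y1.
  rewrite fe2 kE r2 sE; field; lra.
have hc : fe * t / sW = 2 * im / W.
  by rewrite hfe -sW2; field; rewrite sW0 t0.
rewrite hP -hW -hsW hc.
split.
- have S0 := pos_neq0 Spos; have e00 := pos_neq0 e0p.
  have -> : (fe / e0) ^+ 2 + ((x2 + y2) / r / (e0 * S)) ^+ 2 =
     (fe ^+ 2 * r ^+ 2 * S ^+ 2 + (x2 + y2) ^+ 2) / (e0 ^+ 2 * r ^+ 2 * S ^+ 2).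
    by field; rewrite S0 e00 r0.
  have hw2 : (x2 + y2) ^+ 2 = W - (x1 + y1) ^+ 2 by rewrite hW; ring.
  have hWr : W = r ^+ 2 - 1 - 2 * (x1 + y1) by rewrite r2 sE; ring.
  have Y0 : e0 ^+ 2 * r ^+ 2 * S ^+ 2 != 0 by rewrite !mulf_neq0 // expf_neq0.
  rewrite -[RHS](divff Y0); congr (_ / _).
  rewrite hw2 S2 e02 fe2 kE hWr.
  by field.
- have h : 2 * W * x1 = W * (x1 + y1) - 2 * im * (x2 + y2).
    apply/eqP; rewrite -subr_eq0; apply/eqP.
    by rewrite -id1; ring.
  by apply: (@mulfI _ (2 * W)); [lra|]; rewrite h; field.
- have h : 2 * W * x2 = W * (x2 + y2) + 2 * im * (x1 + y1).
    apply/eqP; rewrite -subr_eq0; apply/eqP.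
    by rewrite -id2; ring.
  by apply: (@mulfI _ (2 * W)); [lra|]; rewrite h; field.
- have h : 2 * W * y1 = W * (x1 + y1) + 2 * im * (x2 + y2).
    apply/eqP; rewrite -subr_eq0; apply/eqP.
    by rewrite -oppr0 -id1; ring.
  by apply: (@mulfI _ (2 * W)); [lra|]; rewrite h; field.
- have h : 2 * W * y2 = W * (x2 + y2) - 2 * im * (x1 + y1).
    apply/eqP; rewrite -subr_eq0; apply/eqP.
    by rewrite -oppr0 -id2; ring.
  by apply: (@mulfI _ (2 * W)); [lra|]; rewrite h; field.
Qed.


Section Cvg.
Context {T : Type} (F : set_system T) {FF : Filter F}.
Implicit Types (f g : T -> R).

Lemma cC a : (fun _ : T => a) @ F --> a.
Proof. exact: cvg_cst. Qed.
Lemma cD f g a b : f @ F --> a -> g @ F --> b -> (fun t => f t + g t) @ F --> a + b.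
Proof. exact: cvgD. Qed.
Lemma cB f g a b : f @ F --> a -> g @ F --> b -> (fun t => f t - g t) @ F --> a - b.
Proof. exact: cvgB. Qed.
Lemma cN f a : f @ F --> a -> (fun t => - f t) @ F --> - a.
Proof. exact: cvgN. Qed.
Lemma cM f g a b : f @ F --> a -> g @ F --> b -> (fun t => f t * g t) @ F --> a * b.
Proof. exact: cvgM. Qed.
Lemma cV f a : a != 0 -> f @ F --> a -> (fun t => (f t)^-1) @ F --> a^-1.
Proof. exact: cvgV. Qed.
Lemma cX2 f a : f @ F --> a -> (fun t => f t ^+ 2) @ F --> a ^+ 2.
Proof. by move=> h; rewrite expr2; under eq_fun do rewrite expr2; exact: cM. Qed.
Lemma cS f a : f @ F --> a -> (fun t => Num.sqrt (f t)) @ F --> Num.sqrt a.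
Proof. by move=> h; apply: continuous_cvg => //; exact: sqrt_continuous. Qed.
End Cvg.

Ltac cvg1 := match goal with
  | |- (fun t => @?f t + @?g t) @ _ --> _ => apply: cD
  | |- (fun t => @?f t - @?g t) @ _ --> _ => apply: cB
  | |- (fun t => - @?f t) @ _ --> _ => apply: cN
  | |- (fun t => @?f t ^+ 2) @ _ --> _ => apply: cX2
  | |- (fun t => (@?f t)^-1) @ _ --> _ => apply: cV
  | |- (fun t => @?f t * @?g t) @ _ --> _ => apply: cM
  | |- (fun t => Num.sqrt (@?f t)) @ _ --> _ => apply: cS
  | |- (fun t => rr (@?f t)) @ _ --> _ => apply: cS
  | |- (fun t => _) @ _ --> _ => apply: cC
  | |- _ => assumption
  end.
Ltac cvgt := repeat cvg1.

Section CvgFun.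
Context {T : Type} (F : set_system T) {FF : Filter F}.
Variables (S X1 X2 Y1 Y2 A B : T -> R) (s x1 x2 y1 y2 a b : R).
Hypotheses (hS : S @ F --> s) (hX1 : X1 @ F --> x1) (hX2 : X2 @ F --> x2)
  (hY1 : Y1 @ F --> y1) (hY2 : Y2 @ F --> y2) (hA : A @ F --> a) (hB : B @ F --> b).

Lemma cvg_rr : (fun t => rr (S t)) @ F --> rr s.
Proof. by rewrite /rr; cvgt. Qed.

Lemma cvg_kap : 1 < s < 9 -> (fun t => kap (S t)) @ F --> kap s.
Proof.
move=> hs; have [r1 _] := @s_facts s hs.
rewrite /kap; cvgt.
by apply: mulf_neq0 => //; apply: pos_neq0; lra.
Qed.

Lemma cvg_ee0 : 1 < s < 9 -> (fun t => ee0 (S t)) @ F --> ee0 s.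
Proof.
move=> hs; have [r1 _] := @s_facts s hs.
rewrite /ee0 /kap; cvgt.
by apply: mulf_neq0 => //; apply: pos_neq0; lra.
Qed.

Lemma cvg_fe : 1 < s < 9 -> 0 < (x1 + y1) ^+ 2 + (x2 + y2) ^+ 2 ->
  (fun t => fe (S t) (X1 t) (X2 t) (Y1 t) (Y2 t)) @ F --> fe s x1 x2 y1 y2.
Proof.
move=> hs hW; have [r1 _] := @s_facts s hs.
rewrite /fe; cvgt.
apply: mulf_neq0; apply: pos_neq0; apply: sqrt_pos => //; lra.
Qed.

Lemma fe_facts : 1 < s < 9 -> 0 < ee0 s /\ 0 < Num.sqrt (1 + kap s + fe s x1 x2 y1 y2 ^+ 2).
Proof.
move=> hs; have [r1 [r3 [r2 [k1 [k2 kE]]]]] := @s_facts s hs.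
split; apply: sqrt_pos => //; first lra.
by have := sqr_ge0 (fe s x1 x2 y1 y2); lra.
Qed.

Lemma cvg_fa : 1 < s < 9 -> 0 < (x1 + y1) ^+ 2 + (x2 + y2) ^+ 2 ->
  (fun t => fa (S t) (X1 t) (X2 t) (Y1 t) (Y2 t)) @ F --> fa s x1 x2 y1 y2.
Proof.
move=> hs hW; have [e0p _] := fe_facts hs.
rewrite /fa; apply: cM; first exact: cvg_fe.
apply: cV; first exact: pos_neq0.
exact: cvg_ee0.
Qed.

Lemma cvg_fb : 1 < s < 9 -> 0 < (x1 + y1) ^+ 2 + (x2 + y2) ^+ 2 ->
  (fun t => fb (S t) (X1 t) (X2 t) (Y1 t) (Y2 t)) @ F --> fb s x1 x2 y1 y2.
Proof.
move=> hs hW; have [e0p Sp] := fe_facts hs.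
have [r1 _] := @s_facts s hs.
rewrite /fb; apply: cM; first apply: cM; first by cvgt.
- apply: cV; first by apply: pos_neq0; lra.
  exact: cvg_rr.
- apply: cV; first by apply: mulf_neq0; apply: pos_neq0.
  apply: cM; first exact: cvg_ee0.
  apply: cS; apply: cD; first by apply: cD; [exact: cC | exact: cvg_kap].
  by apply: cX2; exact: cvg_fe.
Qed.

Lemma inv_W : 1 < s < 9 -> a ^+ 2 + b ^+ 2 = 1 ->
  0 < iw1 s a ^+ 2 + iw2 s a b ^+ 2.
Proof.
move=> hs hab; have [_ _ h _ _] := @inv_ok s a b hs hab.
have e1 : gx1 s a b + gy1 s a b = iw1 s a by rewrite /gx1 /gy1; field.
have e2 : gx2 s a b + gy2 s a b = iw2 s a b by rewrite /gx2 /gy2; field.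
move: h; rewrite -addrA e1 e2 => h.
have W0 : 0 <= iw1 s a ^+ 2 + iw2 s a b ^+ 2 by rewrite addr_ge0 // sqr_ge0.
rewrite lt_neqAle W0 andbT; apply/eqP => W00.
have g1 := sqr_ge0 (iw1 s a); have g2 := sqr_ge0 (iw2 s a b).
have : iw1 s a ^+ 2 = 0 by lra.
move/eqP; rewrite sqrf_eq0 => /eqP h1.
have : iw2 s a b ^+ 2 = 0 by lra.
move/eqP; rewrite sqrf_eq0 => /eqP h2.
by move: h hs; rewrite h1 h2 addr0 expr0n /= addr0 expr1n => <-; lra.
Qed.

Lemma cvg_ie : 1 < s < 9 -> (fun t => ie (S t) (A t)) @ F --> ie s a.
Proof. by move=> hs; rewrite /ie; apply: cM => //; exact: cvg_ee0. Qed.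

Lemma cvg_iq : 1 < s < 9 -> (fun t => iq (S t) (A t) (B t)) @ F --> iq s a b.
Proof.
move=> hs; rewrite /iq; apply: cM; first by apply: cM => //; exact: cvg_ee0.
apply: cS; apply: cD; first by apply: cD; [exact: cC | exact: cvg_kap].
by apply: cX2; exact: cvg_ie.
Qed.

Lemma cvg_iw1 : 1 < s < 9 -> (fun t => iw1 (S t) (A t)) @ F --> iw1 s a.
Proof.
move=> hs; rewrite /iw1; apply: cB; last exact: cC.
apply: cM; first exact: cvg_rr.
by apply: cD; [apply: cX2; exact: cvg_ie | exact: cvg_kap].
Qed.

Lemma cvg_iw2 : 1 < s < 9 -> (fun t => iw2 (S t) (A t) (B t)) @ F --> iw2 s a b.
Proof. by move=> hs; rewrite /iw2; apply: cM; [exact: cvg_rr | exact: cvg_iq]. Qed.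

Lemma cvg_ic : 1 < s < 9 -> a ^+ 2 + b ^+ 2 = 1 ->
  (fun t => ic (S t) (A t) (B t)) @ F --> ic s a b.
Proof.
move=> hs hab; have [r1 _] := @s_facts s hs.
rewrite /ic; apply: cM; first apply: cM; first exact: cvg_ie.
- by apply: cS; apply: cM; [exact: cC | exact: cvg_rr].
- apply: cV; first by apply: pos_neq0; apply: sqrt_pos; exact: inv_W.
  by apply: cS; apply: cD; apply: cX2; [exact: cvg_iw1 | exact: cvg_iw2].
Qed.

Lemma cvg_g : 1 < s < 9 -> a ^+ 2 + b ^+ 2 = 1 ->
  [/\ (fun t => gx1 (S t) (A t) (B t)) @ F --> gx1 s a b,
      (fun t => gx2 (S t) (A t) (B t)) @ F --> gx2 s a b,
      (fun t => gy1 (S t) (A t) (B t)) @ F --> gy1 s a b &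
      (fun t => gy2 (S t) (A t) (B t)) @ F --> gy2 s a b].
Proof.
move=> hs hab.
have h1 := cvg_iw1 hs; have h2 := cvg_iw2 hs; have hc := cvg_ic hs hab.
by rewrite /gx1 /gx2 /gy1 /gy2; split; cvgt.
Qed.

End CvgFun.
End Alg.
Arguments rr {R}.
Arguments kap {R}.
Arguments ee0 {R}.
Arguments fe {R}.
Arguments fa {R}.
Arguments fb {R}.
Arguments ie {R}.
Arguments iq {R}.
Arguments iw1 {R}.
Arguments iw2 {R}.
Arguments ic {R}.
Arguments gx1 {R}.
Arguments gx2 {R}.
Arguments gy1 {R}.
Arguments gy2 {R}.
Arguments pos_neq0 {R}.
Arguments sqrtK {R}.
Arguments sqrt_pos {R}.
Arguments s_facts {R}.
Arguments inv_ok {R}.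
Arguments fwd_ok {R}.
Arguments inv_W {R}.

Section C.
Variable R : realType.
Notation C := (CC R).

Lemma normCE (z : C) : `|z| = (Num.sqrt (complex.Re z ^+ 2 + complex.Im z ^+ 2))%:C%C.
Proof. exact: normc_def. Qed.

Lemma ltCR (a b : R) : ((a%:C)%C < (b%:C)%C :> C) = (a < b).
Proof. exact: ltcR. Qed.

Lemma Re_le_norm (a b : R) : `|a| <= Num.sqrt (a ^+ 2 + b ^+ 2).
Proof.
rewrite -sqrtr_sqr; apply: ler_wsqrtr; rewrite lerDl; exact: sqr_ge0.
Qed.

Lemma cvg_Re (T : Type) (F : set_system T) {FF : Filter F} (f : T -> C) (z : C) :
  f @ F --> z -> (fun t => complex.Re (f t)) @ F --> complex.Re z.
Proof.
move=> /cvgrPdist_lt fz; apply/cvgrPdist_lt => e e0.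
have e0' : (0 : C) < (e%:C)%C by rewrite ltcR.
apply: filterS (fz _ e0') => t; move: (f t) => w.
rewrite normCE ltcR; clear fz; case: z => a b; case: w => c d /=.
by move=> h; apply: le_lt_trans h; apply: Re_le_norm.
Qed.

Lemma Im_le_norm (a b : R) : `|b| <= Num.sqrt (a ^+ 2 + b ^+ 2).
Proof. by rewrite addrC; apply: Re_le_norm. Qed.

Lemma cvg_Im (T : Type) (F : set_system T) {FF : Filter F} (f : T -> C) (z : C) :
  f @ F --> z -> (fun t => complex.Im (f t)) @ F --> complex.Im z.
Proof.
move=> /cvgrPdist_lt fz; apply/cvgrPdist_lt => e e0.
have e0' : (0 : C) < (e%:C)%C by rewrite ltcR.
apply: filterS (fz _ e0') => t; move: (f t) => w.
rewrite normCE ltcR; clear fz; case: z => a b; case: w => c d /=.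
by move=> h; apply: le_lt_trans h; apply: Im_le_norm.
Qed.

Lemma sqrt_le_add (x y : R) : Num.sqrt (x ^+ 2 + y ^+ 2) <= `|x| + `|y|.
Proof.
have h : 0 <= `|x| + `|y| by rewrite addr_ge0.
rewrite -(ger0_norm h) -sqrtr_sqr; apply: ler_wsqrtr.
rewrite -(real_normK (num_real x)) -(real_normK (num_real y)).
have := normr_ge0 x; have := normr_ge0 y; move: `|x| `|y| => u v hu hv.
nra.
Qed.

Lemma cvg_mkC (T : Type) (F : set_system T) {FF : Filter F} (f1 f2 : T -> R) (a b : R) :
  f1 @ F --> a -> f2 @ F --> b ->
  (fun t => ((f1 t) +i* (f2 t))%C : C) @ F --> ((a +i* b)%C : C).
Proof.
move=> /cvgrPdist_lt h1 /cvgrPdist_lt h2; apply/cvgrPdist_lt => e.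
case: e => e1 e2; rewrite ltcE /= => /andP[/eqP -> e10].
have eh : 0 < e1 / 2 by rewrite divr_gt0.
apply: filterS2 (h1 _ eh) (h2 _ eh) => t; clear h1 h2.
move: (f1 t) (f2 t) => c d hc hd.
rewrite normCE ltcR /=.
apply: le_lt_trans (sqrt_le_add _ _) _.
have -> : e1 = e1 / 2 + e1 / 2 by field.
by apply: ltrD.
Qed.
End C.

Arguments cvg_fa {R T F FF S X1 X2 Y1 Y2 s x1 x2 y1 y2}.
Arguments cvg_fb {R T F FF S X1 X2 Y1 Y2 s x1 x2 y1 y2}.
Arguments cvg_g {R T F FF S A B s a b}.
Arguments cvg_Re {R T F FF f z}.
Arguments cvg_Im {R T F FF f z}.
Arguments cvg_mkC {R T F FF f1 f2 a b}.

Section M.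
Variable R : realType.
Notation C := (CC R).
Notation Rc := (@complex.Re R).
Notation Ic := (@complex.Im R).

Lemma P6_formula (x y : C) : `|x| = 1 -> `|y| = 1 ->
  (x + y + 1) * (x^-1 + y^-1 + 1) =
  (((1 + Rc x + Rc y) ^+ 2 + (Ic x + Ic y) ^+ 2)%:C)%C.
Proof.
move=> hx hy.
rewrite (invC_norm x) (invC_norm y) hx hy expr1n invr1 !mul1r.
case: x {hx} => x1 x2; case: y {hy} => y1 y2.
by apply/eqP; rewrite eq_complex /=; apply/andP; split; apply/eqP; ring.
Qed.

Lemma norm1E (z : C) : (`|z| = 1) <-> (Rc z ^+ 2 + Ic z ^+ 2 = 1).
Proof.
rewrite normCE; split.
- case=> h; have h0 : 0 <= Rc z ^+ 2 + Ic z ^+ 2 by rewrite addr_ge0 // sqr_ge0.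
  by rewrite -(@sqrtK R _ h0) h expr1n.
- by move=> ->; rewrite sqrtr1.
Qed.

Lemma normRC (v : R) : 0 <= v -> `|((v%:C)%C : C)| = ((v%:C)%C : C).
Proof.
move=> v0; rewrite normCE /=.
by rewrite expr0n /= addr0 sqrtr_sqr ger0_norm.
Qed.

Lemma nineC : (9%:R : C) = (((9%:R : R)%:C)%C : C).
Proof. by rewrite rmorph_nat. Qed.

Lemma oneC : (1 : C) = ((1 +i* 0)%C : C).
Proof. by []. Qed.


Definition vv (x y : C) : R := (1 + Rc x + Rc y) ^+ 2 + (Ic x + Ic y) ^+ 2.

Lemma vv_le9 (x1 x2 y1 y2 : R) : x1 ^+ 2 + x2 ^+ 2 = 1 -> y1 ^+ 2 + y2 ^+ 2 = 1 ->
  9 <= (1 + x1 + y1) ^+ 2 + (x2 + y2) ^+ 2 -> [/\ x1 = 1, x2 = 0, y1 = 1 & y2 = 0].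
Proof.
move=> hx hy h9.
have ex : (1 + x1 + y1) ^+ 2 + (x2 + y2) ^+ 2 =
  3 + 2 * x1 + 2 * y1 + 2 * (x1 * y1 + x2 * y2) +
  (x1 ^+ 2 + x2 ^+ 2 - 1) + (y1 ^+ 2 + y2 ^+ 2 - 1) by ring.
rewrite hx hy subrr !addr0 in ex.
have d1 : x1 * y1 + x2 * y2 <= 1.
  have := sqr_ge0 (x1 - y1); have := sqr_ge0 (x2 - y2).
  have e : (x1 - y1) ^+ 2 + (x2 - y2) ^+ 2 = 2 - 2 * (x1 * y1 + x2 * y2) +
    (x1 ^+ 2 + x2 ^+ 2 - 1) + (y1 ^+ 2 + y2 ^+ 2 - 1) by ring.
  rewrite hx hy subrr !addr0 in e.
  by lra.
have x1le : x1 <= 1 by have := sqr_ge0 x2; nra.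
have y1le : y1 <= 1 by have := sqr_ge0 y2; nra.
have x11 : x1 = 1 by lra.
have y11 : y1 = 1 by lra.
have : x2 ^+ 2 = 0 by move: hx; rewrite x11; lra.
move/eqP; rewrite sqrf_eq0 => /eqP x20.
have : y2 ^+ 2 = 0 by move: hy; rewrite y11; lra.
by move/eqP; rewrite sqrf_eq0 => /eqP y20.
Qed.

Lemma A_facts (p : C * C * C) :
  (deninger_cycle R `\` [set ((1, 1), 9%:R)]) p ->
  [/\ Rc p.1.1 ^+ 2 + Ic p.1.1 ^+ 2 = 1, Rc p.1.2 ^+ 2 + Ic p.1.2 ^+ 2 = 1,
      p.2 = ((vv p.1.1 p.1.2)%:C)%C & 1 < vv p.1.1 p.1.2 < 9].
Proof.
case: p => [[x y] s] [[[_ _ _ hP] [hx hy hs]] hnot] /=.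
have sE : s = ((vv x y)%:C)%C.
  by move: hP; rewrite /P6 /= => /eqP; rewrite subr_eq0 => /eqP ->; rewrite P6_formula.
have hx' := iffLR (norm1E x) hx; have hy' := iffLR (norm1E y) hy.
have v0 : 0 <= vv x y by rewrite /vv addr_ge0 // sqr_ge0.
move: hs; rewrite /= sE normRC // ltcR => v1.
split => //; rewrite v1 /=.
rewrite ltNge; apply/negP => v9.
move: hnot; rewrite /vv in v9.
clear - hx' hy' v9 sE; case: x hx' v9 sE => x1 x2 hx'; case: y hy' => y1 y2 hy' /= v9 sE.
have [e1 e2 e3 e4] := @vv_le9 x1 x2 y1 y2 hx' hy' v9.
subst x1 x2 y1 y2.
apply; congr (_, _).
rewrite sE /vv /=.
have -> : (1 + 1 + 1) ^+ 2 + (0 + 0) ^+ 2 = (9%:R : R) by ring.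
by rewrite nineC.
Qed.

Definition S1 : set C := [set z | `|z| = 1].

Lemma S1_1 : (1 : C) \in S1.
Proof. by rewrite inE /S1 /= normr1. Qed.

Definition toS1 (z : C) : set_type S1 :=
  match pselect (S1 z) with
  | left H => exist _ z (mem_set H)
  | right _ => exist _ 1 S1_1
  end.

Lemma toS1E (z : C) : S1 z -> val (toS1 z) = z.
Proof. by rewrite /toS1; case: pselect. Qed.

Lemma S1P (z : set_type S1) : Rc (val z) ^+ 2 + Ic (val z) ^+ 2 = 1.
Proof. by apply/norm1E; have := set_valP z. Qed.

Definition hz (p : C * C * C) : C :=
  (fa (Rc p.2) (Rc p.1.1) (Ic p.1.1) (Rc p.1.2) (Ic p.1.2) +i*
   fb (Rc p.2) (Rc p.1.1) (Ic p.1.1) (Rc p.1.2) (Ic p.1.2))%C.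

Definition hmap (p : C * C * C) : C * set_type S1 := (p.2, toS1 (hz p)).

Definition gmap (q : C * set_type S1) : C * C * C :=
  ((gx1 (Rc q.1) (Rc (val q.2)) (Ic (val q.2)) +i*
    gx2 (Rc q.1) (Rc (val q.2)) (Ic (val q.2)),
    gy1 (Rc q.1) (Rc (val q.2)) (Ic (val q.2)) +i*
    gy2 (Rc q.1) (Rc (val q.2)) (Ic (val q.2)))%C, q.1).

Lemma B_facts (b : C) : interval_1_9 R b -> b = ((Rc b)%:C)%C /\ 1 < Rc b < 9.
Proof.
case: b => b1 b2 [_ /andP[h1 h9]].
move: h1; rewrite oneC ltcE /= => /andP[/eqP b20 h1].
move: h9; rewrite nineC ltcE /= => /andP[_ h9].
by rewrite b20; split => //; rewrite h1 h9.
Qed.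

Lemma B_of (v : R) : 1 < v < 9 -> interval_1_9 R ((v%:C)%C).
Proof.
move=> /andP[h1 h9]; split; first by rewrite complex_real.
by rewrite oneC nineC !ltcE /= h1 h9 eqxx.
Qed.

Let AA := deninger_cycle R `\` [set ((1, 1), 9%:R)].

Lemma g_good (b : C) (z : set_type S1) : interval_1_9 R b ->
  AA (gmap (b, z)) /\ hmap (gmap (b, z)) = (b, z).
Proof.
move=> /B_facts [bE hb]; have hz1 := S1P z; rewrite /= in hz1.
have [n1 n2 sum fa_eq fb_eq] := @inv_ok R _ _ _ hb hz1.
have hx : `|(gx1 (Rc b) (Rc (val z)) (Ic (val z)) +i*
            gx2 (Rc b) (Rc (val z)) (Ic (val z)))%C : C| = 1 by apply/norm1E.
have hy : `|(gy1 (Rc b) (Rc (val z)) (Ic (val z)) +i*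
            gy2 (Rc b) (Rc (val z)) (Ic (val z)))%C : C| = 1 by apply/norm1E.
split.
- split.
  + split; last split.
    * split => /=.
      -- by rewrite -normr_eq0 hx oner_neq0.
      -- by rewrite -normr_eq0 hy oner_neq0.
      -- by rewrite bE; apply/negP => /eqP [] b0; move: hb; rewrite b0; lra.
      -- by rewrite /P6 P6_formula //= sum -bE subrr.
    * done.
    * done.
    * by rewrite /= bE normRC ?ltcR; case/andP: hb => //; lra.
  + move=> /= /(congr1 snd) /= e; move: hb; rewrite e nineC /=; lra.
- rewrite /hmap /gmap /=; congr (_, _).
  apply: val_inj; rewrite toS1E /hz /= fa_eq fb_eq; first by case: (sval z).
  by apply/norm1E; rewrite /hz /=.
Qed.


Lemma cEta (x : C) : (Rc x +i* Ic x)%C = x.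
Proof. by case: x. Qed.

Lemma h_good (p : C * C * C) : AA p ->
  [/\ interval_1_9 R p.2, S1 (hz p) & gmap (hmap p) = p].
Proof.
move=> Ap; have [hx hy sE hv] := @A_facts p Ap.
have hsum : (1 + Rc p.1.1 + Rc p.1.2) ^+ 2 + (Ic p.1.1 + Ic p.1.2) ^+ 2 =
  vv p.1.1 p.1.2 by [].
have [ab e1 e2 e3 e4] := @fwd_ok R _ _ _ _ _ hv hx hy hsum.
have sR : Rc p.2 = vv p.1.1 p.1.2 by rewrite sE.
have S1h : S1 (hz p) by apply/norm1E; rewrite /hz /= sR.
split => //; first by rewrite sE; exact: B_of.
rewrite /gmap /hmap /= toS1E // /hz /= sR e1 e2 e3 e4.
by rewrite !cEta -!surjective_pairing.
Qed.


Lemma cvg_S1 (T : Type) (G : set_system T) {FG : Filter G} (k : T -> set_type S1)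
  (y : set_type S1) : (fun t => val (k t)) @ G --> val y -> k @ G --> y.
Proof.
move=> cf U [?/= [[W oW <-]]] /= Wsfz /filterS; apply; apply: cf.
by apply: open_nbhs_nbhs; split => //; move: Wsfz; rewrite set_valE.
Qed.

Lemma c_2 (x : C * C * C) : (fun t : C * C * C => t.2) @ nbhs x --> x.2.
Proof. exact: cvg_snd. Qed.

Lemma c_11 (x : C * C * C) : (fun t : C * C * C => t.1.1) @ nbhs x --> x.1.1.
Proof. exact: (cvg_comp _ _ (@cvg_fst _ _ _ _ _) (@cvg_fst _ _ _ _ _)). Qed.

Lemma c_12 (x : C * C * C) : (fun t : C * C * C => t.1.2) @ nbhs x --> x.1.2.
Proof. exact: (cvg_comp _ _ (@cvg_fst _ _ _ _ _) (@cvg_snd _ _ _ _ _)). Qed.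


Lemma Wpos (x1 x2 y1 y2 : R) : 1 < (1 + x1 + y1) ^+ 2 + (x2 + y2) ^+ 2 ->
  0 < (x1 + y1) ^+ 2 + (x2 + y2) ^+ 2.
Proof.
move=> h; have g1 := sqr_ge0 (x1 + y1); have g2 := sqr_ge0 (x2 + y2).
rewrite lt_neqAle addr_ge0 // andbT; apply/eqP => W0.
have : (x1 + y1) ^+ 2 = 0 by lra.
move/eqP; rewrite sqrf_eq0 => /eqP h1.
have : (x2 + y2) ^+ 2 = 0 by lra.
move/eqP; rewrite sqrf_eq0 => /eqP h2.
move: h; rewrite -addrA h1 h2 addr0 expr0n /= addr0 expr1n; lra.
Qed.

Lemma hz_cont (x : C * C * C) : AA x -> hz @ nbhs x --> hz x.
Proof.
move=> Ax; have [hx hy sE hv] := @A_facts x Ax.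
have sR : Rc x.2 = vv x.1.1 x.1.2 by rewrite sE.
have hv' : 1 < Rc x.2 < 9 by rewrite sR.
have hW : 0 < (Rc x.1.1 + Rc x.1.2) ^+ 2 + (Ic x.1.1 + Ic x.1.2) ^+ 2.
  by apply: Wpos; case/andP: hv.
apply: cvg_mkC.
- by apply: cvg_fa => //; (apply: cvg_Re || apply: cvg_Im); by [apply: c_2 | apply: c_11 | apply: c_12].
- by apply: cvg_fb => //; (apply: cvg_Re || apply: cvg_Im); by [apply: c_2 | apply: c_11 | apply: c_12].
Qed.

Lemma h_cont (D : set (C * C * C)) : D `<=` AA -> {within D, continuous hmap}.
Proof.
move=> DA; apply/subspace_continuousP => x Dx.
have [_ S1x _] := @h_good x (DA _ Dx).
rewrite /hmap; apply: (@cvg_pair _ _ _ _ (nbhs x.2) (nbhs (toS1 (hz x)))).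
- by apply: cvg_within_filter; exact: c_2.
- apply: cvg_S1; rewrite toS1E //.
  apply: cvg_trans; first apply: (fmap_within_eq _ (g := hz)).
    by move=> p /set_mem Dp /=; rewrite toS1E //; have [] := @h_good p (DA _ Dp).
  by apply: cvg_within_filter; exact: (@hz_cont x (DA _ Dx)).
Qed.


Lemma val_cont : continuous (fun z : set_type S1 => val z).
Proof.
have := @initial_continuous (set_type S1) C set_val.
by rewrite set_valE.
Qed.

Lemma c_q1 (q : C * set_type S1) : (fun t : C * set_type S1 => t.1) @ nbhs q --> q.1.
Proof. exact: cvg_fst. Qed.

Lemma c_q2 (q : C * set_type S1) :
  (fun t : C * set_type S1 => val t.2) @ nbhs q --> val q.2.
Proof. apply: (cvg_comp (fun t : C * set_type S1 => t.2) (fun z => val z)); first exact: cvg_snd. exact: val_cont. Qed.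

Lemma g_cont (D : set (C * set_type S1)) : (forall q, D q -> interval_1_9 R q.1) ->
  {within D, continuous gmap}.
Proof.
move=> DB; apply/subspace_continuousP => q Dq.
have [bE hb] := @B_facts q.1 (DB _ Dq). have hz1 := S1P q.2.
apply: cvg_within_filter.
have [g1 g2 g3 g4] := @cvg_g R _ _ _ (fun t : C * set_type S1 => Rc t.1)
  (fun t => Rc (val t.2)) (fun t => Ic (val t.2)) _ _ _
  (cvg_Re (c_q1 q)) (cvg_Re (c_q2 q)) (cvg_Im (c_q2 q)) hb hz1.
rewrite /gmap.
apply: (@cvg_pair _ _ _ _ (nbhs (gmap q).1) (nbhs q.1)); last exact: c_q1.
apply: (@cvg_pair _ _ _ _ (nbhs (gmap q).1.1) (nbhs (gmap q).1.2)).
- by apply: cvg_mkC.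
- by apply: cvg_mkC.
Qed.

End M.






Theorem lemma9p6 (R : realType) :
  fibration_above (fun p : CC R * CC R * CC R => p.2)
    (deninger_cycle R `\` [set ((1, 1), 9%:R)])
    (interval_1_9 R).
Proof.
split.
- apply/seteqP; split.
  + by move=> _ [p Ap <-]; have [] := @h_good R p Ap.
  + move=> b Bb; have [Ag _] := @g_good R b (@toS1 R 1) Bb.
    by exists (@gmap R (b, @toS1 R 1)).
- move=> b Bb; exists setT; split => //; first exact: openT.
  exists (set_type (S1 R)), (@hmap R), (@gmap R) => /=.
  split.
  + by apply: h_cont => p [].
  + by apply: g_cont => q [[_ Bq] _].
  + move=> p [Ap _]; have [Bp S1p gh] := @h_good R p Ap.
    by split => //; split => //; split.
  + move=> [b' z] [[_ Bb'] _]; have [Ag hg] := @g_good R b' z Bb'.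
    by split => //; split => //; split.
Qed.
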